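(* Let $L,M$ be distributive lattices and $T:\mathrm{FBL}\langle L\rangle\to\mathrm{FBL}\langle M\rangle$ a (linear) lattice homomorphism, and define $\Phi_T:M^*\to\mathbb R^L$ by $\Phi_T(y^* )(x)=(T\delta_x)(y^* )$. Then: (1) $\Phi_T$ is continuous when $M^*$ and $\mathbb R^L$ carry the product topologies; (2) if $T$ has dense range and $\|T\|\le1$, then $\Phi_T$ is injective; (3) if $T$ is an isometric lattice isomorphism onto $\mathrm{FBL}\langle M\rangle$, then $\Phi_T$ is a bijection from $M^*$ onto $L^*$ and $\Phi_{T^{-1}}=(\Phi_T)^{-1}$; (4) for all $y_1^*,\dots,y_m^*\in M^*$, $\sup_{x\in L}\sum_{i=1}^m|\Phi_T(y_i^* )(x)|\le\|T\|\sup_{y\in M}\sum_{i=1}^m|y_i^*(y)|$.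
   Context: For a distributive lattice $L$, $L^*$ is the set of all lattice homomorphisms $x^*:L\to[-1,1]$, a subset of $\mathbb R^L$ with the product topology; for $x\in L$, $\delta_x:L^*\to\mathbb R$ is $\delta_x(x^* )=x^*(x)$. A function $f:L^*\to\mathbb R$ is positively homogeneous if $f(\lambda x^* )=\lambda f(x^* )$ whenever $\lambda\ge0$ and $\lambda x^*\in L^*$; for such $f$, $\|f\|=\sup\{\sum_{i=1}^m|f(x_i^* )|: m\in\mathbb N,\ x_i^*\in L^*,\ \sup_{x\in L}\sum_{i=1}^m|x_i^*(x)|\le1\}$. $\mathrm{FBL}\langle L\rangle$ is the norm closure of the vector sublattice generated by $\{\delta_x:x\in L\}$ inside the Banach lattice of positively homogeneous functions on $L^*$ with finite norm, with pointwise order and operations; its elements are continuous functions on $L^*$. *)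

(* Defs.v *)
From HB Require Import structures.
From mathcomp Require Import all_boot all_order all_algebra.
From mathcomp Require Import all_classical all_reals all_analysis.
Set Implicit Arguments. Unset Strict Implicit. Unset Printing Implicit Defensive.
Import Order.TTheory GRing.Theory Num.Theory.
Import numFieldNormedType.Exports.
Local Open Scope classical_set_scope.
Local Open Scope ring_scope.

Section FBL.
Variable R : realType.

Definition Lstar d (L : distrLatticeType d) : set (L -> R) :=
  [set xs | (forall x, -1 <= xs x <= 1) /\
            (forall x y, xs (Order.meet x y) = Num.min (xs x) (xs y)) /\
            (forall x y, xs (Order.join x y) = Num.max (xs x) (xs y))].

(* Functions on Lstar are represented as functions on R^L that vanish off Lstar. *)
Definition delta d (L : distrLatticeType d) (x : L) : (L -> R) -> R :=
  fun xs => if `[< Lstar xs >] then xs x else 0.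

Definition pos_hom d (L : distrLatticeType d) (f : (L -> R) -> R) : Prop :=
  forall (lam : R) (xs : L -> R), 0 <= lam -> Lstar xs ->
    Lstar (fun x => lam * xs x) -> f (fun x => lam * xs x) = lam * f xs.

Definition fbl_norm d (L : distrLatticeType d) (f : (L -> R) -> R) : \bar R :=
  ereal_sup [set e | exists (m : nat) (xs : 'I_m -> L -> R),
     [/\ (forall i, Lstar (xs i)),
         (forall x : L, \sum_(i < m) `|xs i x| <= 1) &
         e = (\sum_(i < m) `|f (xs i)|)%:E]].

Definition ambient d (L : distrLatticeType d) (f : (L -> R) -> R) : Prop :=
  [/\ (forall xs, ~ Lstar xs -> f xs = 0), pos_hom f & (fbl_norm f < +oo)%E].

Inductive gen d (L : distrLatticeType d) : ((L -> R) -> R) -> Prop :=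
  | gen_delta x : gen (delta x)
  | gen_zero : gen (fun _ => 0)
  | gen_add f g : gen f -> gen g -> gen (fun xs => f xs + g xs)
  | gen_scale (a : R) f : gen f -> gen (fun xs => a * f xs)
  | gen_max f g : gen f -> gen g -> gen (fun xs => Num.max (f xs) (g xs))
  | gen_min f g : gen f -> gen g -> gen (fun xs => Num.min (f xs) (g xs)).

Definition FBL d (L : distrLatticeType d) (f : (L -> R) -> R) : Prop :=
  ambient f /\ forall e : R, 0 < e -> exists g, gen g /\
    (fbl_norm (fun xs => (f xs - g xs)%R) <= e%:E)%E.

Section Ops.
Context d (L : distrLatticeType d) d' (M : distrLatticeType d').
Implicit Type T : ((L -> R) -> R) -> ((M -> R) -> R).

Definition lattice_hom T : Prop :=
  [/\ (forall f, FBL f -> FBL (T f)),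
      (forall a b f g, FBL f -> FBL g ->
         T (fun xs => a * f xs + b * g xs) = (fun ys => a * T f ys + b * T g ys)),
      (forall f g, FBL f -> FBL g ->
         T (fun xs => Num.max (f xs) (g xs)) = (fun ys => Num.max (T f ys) (T g ys))) &
      (forall f g, FBL f -> FBL g ->
         T (fun xs => Num.min (f xs) (g xs)) = (fun ys => Num.min (T f ys) (T g ys)))].

Definition op_norm T : \bar R :=
  ereal_sup [set fbl_norm (T f) | f in [set f | FBL f /\ (fbl_norm f <= 1%:E)%E]].

Definition dense_range T : Prop :=
  forall g, FBL g -> forall e : R, 0 < e ->
    exists f, FBL f /\ (fbl_norm (fun ys => (T f ys - g ys)%R) < e%:E)%E.

Definition isometric_iso T : Prop :=
  [/\ (forall f g, FBL f -> FBL g -> T f = T g -> f = g),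
      (forall g, FBL g -> exists2 f, FBL f & T f = g) &
      (forall f, FBL f -> fbl_norm (T f) = fbl_norm f)].

Definition Phi T : (M -> R) -> (L -> R) := fun ys x => T (delta x) ys.

End Ops.
End FBL.

(* Main.v *)
Require Import Defs.
From HB Require Import structures.
From mathcomp Require Import all_boot all_order all_algebra.
From mathcomp Require Import all_classical all_reals all_analysis.
From mathcomp Require Import ring lra.
Set Implicit Arguments. Unset Strict Implicit. Unset Printing Implicit Defensive.
Import Order.TTheory GRing.Theory Num.Theory.
Import numFieldNormedType.Exports.
Local Open Scope classical_set_scope.
Local Open Scope ring_scope.

Section Basic.
Variables (R : realType) (d : Order.disp_t) (L : distrLatticeType d).
Implicit Types (f g h : (L -> R) -> R) (xs : L -> R).

Lemma norm_ge0 f : (0 <= fbl_norm f)%E.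
Proof.
apply: ereal_sup_ubound; exists 0%N, (fun _ _ => 0); split.
- by case.
- by move=> x; rewrite big_ord0.
- by rewrite big_ord0.
Qed.

Lemma Lstar_bd xs x : Lstar xs -> `|xs x| <= 1.
Proof. by case=> H _; rewrite ler_norml H. Qed.

Lemma pt_bound f xs : Lstar xs -> (`|f xs|%:E <= fbl_norm f)%E.
Proof.
move=> Lx; apply: ereal_sup_ubound; exists 1%N, (fun _ => xs); split => //.
- by move=> x; rewrite big_ord1; exact: Lstar_bd.
- by rewrite big_ord1.
Qed.

Lemma norm0 : (fbl_norm (fun _ : L -> R => 0%R) <= 0%:E)%E.
Proof.
apply: ge_ereal_sup => _ [m [xs [_ _ ->]]]; rewrite lee_fin big1 // => i _.
by rewrite normr0.
Qed.

Lemma norm_dom {f g h} {U V a b : R} : 0 <= a -> 0 <= b ->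
  (fbl_norm f <= U%:E)%E -> (fbl_norm g <= V%:E)%E ->
  (forall xs, Lstar xs -> `|h xs| <= a * `|f xs| + b * `|g xs|) ->
  (fbl_norm h <= (a * U + b * V)%:E)%E.
Proof.
move=> a0 b0 nf ng H; apply: ge_ereal_sup => _ [m [xs [Lxs Hs ->]]].
rewrite lee_fin.
have sf : \sum_(i < m) `|f (xs i)| <= U.
  by rewrite -lee_fin; apply: le_trans nf; apply: ereal_sup_ubound; exists m, xs.
have sg : \sum_(i < m) `|g (xs i)| <= V.
  by rewrite -lee_fin; apply: le_trans ng; apply: ereal_sup_ubound; exists m, xs.
apply: (@le_trans _ _ (\sum_(i < m) (a * `|f (xs i)| + b * `|g (xs i)|))).
  by apply: ler_sum => i _; exact: H.
rewrite big_split /= -!mulr_sumr.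
by apply: lerD; apply: ler_wpM2l.
Qed.

Lemma norm_fin f : (fbl_norm f < +oo)%E -> exists U : R, (fbl_norm f <= U%:E)%E.
Proof.
by move=> H; exists (fine (fbl_norm f)); rewrite fineK // ge0_fin_numE // norm_ge0.
Qed.

Lemma norm_delta (x : L) : (fbl_norm (@delta R _ _ x) <= 1%:E)%E.
Proof.
apply: ge_ereal_sup => _ [m [xs [Lxs Hs ->]]]; rewrite lee_fin.
rewrite (eq_bigr (fun i => `|xs i x|)) ?Hs // => i _.
by rewrite /delta asboolT.
Qed.

Lemma max_bd (a b : R) : `|Num.max a b| <= `|a| + `|b|.
Proof.
by rewrite maxEle; case: ifP => _; [rewrite lerDr | rewrite lerDl].
Qed.

Lemma min_bd (a b : R) : `|Num.min a b| <= `|a| + `|b|.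
Proof.
by rewrite minEle; case: ifP => _; [rewrite lerDl | rewrite lerDr].
Qed.

Lemma gen_amb' h : gen h ->
  [/\ (forall xs, ~ Lstar xs -> h xs = 0), pos_hom h &
      exists U, (fbl_norm h <= U%:E)%E].
Proof.
elim=> {h}.
- move=> x; split.
  + by move=> xs Lx; rewrite /delta asboolF.
  + by move=> lam xs l0 Lx Llx; rewrite /delta !asboolT.
  + by exists 1; exact: norm_delta.
- split => //.
  + by move=> lam xs *; rewrite mulr0.
  + by exists 0; exact: norm0.
- move=> f g _ [Vf Pf [U Uf]] _ [Vg Pg [V Vg']]; split.
  + by move=> xs Lx; rewrite Vf // Vg // addr0.
  + by move=> lam xs l0 Lx Llx; rewrite Pf // Pg // mulrDr.
  + exists (1 * U + 1 * V); apply: (norm_dom _ _ Uf Vg') => // xs _.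
    by rewrite !mul1r ler_normD.
- move=> a f _ [Vf Pf [U Uf]]; split.
  + by move=> xs Lx; rewrite Vf // mulr0.
  + by move=> lam xs l0 Lx Llx; rewrite Pf // mulrCA.
  + exists (`|a| * U + 0 * 0); apply: (norm_dom _ _ Uf (norm0)) => // xs _.
    by rewrite mul0r addr0 normrM.
- move=> f g _ [Vf Pf [U Uf]] _ [Vg Pg [V Vg']]; split.
  + by move=> xs Lx; rewrite Vf // Vg // maxxx.
  + by move=> lam xs l0 Lx Llx; rewrite Pf // Pg // maxr_pMr.
  + exists (1 * U + 1 * V); apply: (norm_dom _ _ Uf Vg') => // xs _.
    by rewrite !mul1r max_bd.
- move=> f g _ [Vf Pf [U Uf]] _ [Vg Pg [V Vg']]; split.
  + by move=> xs Lx; rewrite Vf // Vg // minxx.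
  + by move=> lam xs l0 Lx Llx; rewrite Pf // Pg // minr_pMr.
  + exists (1 * U + 1 * V); apply: (norm_dom _ _ Uf Vg') => // xs _.
    by rewrite !mul1r min_bd.
Qed.

Lemma FBL_gen h : gen h -> FBL h.
Proof.
move=> gh; have [V P [U HU]] := gen_amb' gh.
split; first by split => //; apply: le_lt_trans HU _; exact: ltry.
move=> e e0; exists h; split => //.
rewrite (_ : (fun xs => h xs - h xs) = fun _ => 0); last first.
  by apply: funext => xs; rewrite subrr.
by apply: le_trans norm0 _; rewrite lee_fin ltW.
Qed.

Lemma FBL_delta (x : L) : FBL (@delta R _ _ x).
Proof. exact/FBL_gen/gen_delta. Qed.

Lemma FBL0 : FBL (fun _ : L -> R => 0%R).
Proof. exact/FBL_gen/gen_zero. Qed.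

Lemma FBL_comb (a b : R) f g : FBL f -> FBL g ->
  FBL (fun xs => a * f xs + b * g xs).
Proof.
move=> [[Vf Pf Nf] Af] [[Vg Pg Ng] Ag].
have [U HU] := norm_fin Nf; have [V HV] := norm_fin Ng.
split.
  split.
  - by move=> xs Lx; rewrite Vf // Vg // !mulr0 addr0.
  - by move=> lam xs l0 Lx Llx; rewrite Pf // Pg //; ring.
  - apply: (@le_lt_trans _ _ ((`|a| * U + `|b| * V)%:E)); last exact: ltry.
    apply: (norm_dom _ _ HU HV) => // xs _.
    by rewrite -!normrM ler_normD.
move=> e e0.
set c := `|a| + `|b| + 1.
have c0 : 0 < c by rewrite /c; apply: ltr_wpDl => //; rewrite addr_ge0.
have ec : 0 < e / c by rewrite divr_gt0.
have [hf [ghf Hf]] := Af _ ec; have [hg [ghg Hg]] := Ag _ ec.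
exists (fun xs => a * hf xs + b * hg xs); split.
  by apply: gen_add; apply: gen_scale.
apply: le_trans (_ : (fbl_norm _ <= (`|a| * (e / c) + `|b| * (e / c))%:E)%E) _.
  apply: (norm_dom _ _ Hf Hg) => // xs _.
  rewrite -!normrM.
  have -> : a * f xs + b * g xs - (a * hf xs + b * hg xs) =
     a * (f xs - hf xs) + b * (g xs - hg xs) by ring.
  exact: ler_normD.
rewrite lee_fin -mulrDl mulrA ler_pdivrMr // /c.
have ha := normr_ge0 a; have hb := normr_ge0 b.
rewrite [X in _ <= X]mulrDr mulr1 mulrC lerDl; exact: ltW.
Qed.

End Basic.
Arguments FBL_delta {R d L} x.
Arguments norm_delta {R d L} x.
Arguments FBL0 {R d L}.
Arguments norm0 {R d L}.


Lemma max_lip (R : realType) (a b c e : R) :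
  `|Num.max a b - Num.max c e| <= `|a - c| + `|b - e|.
Proof.
have h1 := ler_norm (a - c); have h2 := ler_norm (c - a); rewrite distrC in h2.
have h3 := ler_norm (b - e); have h4 := ler_norm (e - b); rewrite distrC in h4.
move: h1 h2 h3 h4; set A := `|a - c|; set B := `|b - e| => h1 h2 h3 h4.
rewrite ler_norml !maxEle; case: ifP => k1; case: ifP => k2; apply/andP; split; lra.
Qed.
Lemma min_lip (R : realType) (a b c e : R) :
  `|Num.min a b - Num.min c e| <= `|a - c| + `|b - e|.
Proof.
have h1 := ler_norm (a - c); have h2 := ler_norm (c - a); rewrite distrC in h2.
have h3 := ler_norm (b - e); have h4 := ler_norm (e - b); rewrite distrC in h4.
move: h1 h2 h3 h4; set A := `|a - c|; set B := `|b - e| => h1 h2 h3 h4.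
rewrite ler_norml !minEle; case: ifP => k1; case: ifP => k2; apply/andP; split; lra.
Qed.

Section MaxMin.
Variables (R : realType) (d : Order.disp_t) (L : distrLatticeType d).
Implicit Types (f g h : (L -> R) -> R) (xs : L -> R).

Lemma FBL_max f g : FBL f -> FBL g -> FBL (fun xs => Num.max (f xs) (g xs)).
Proof.
move=> [[Vf Pf Nf] Af] [[Vg Pg Ng] Ag].
have [U HU] := norm_fin Nf; have [V HV] := norm_fin Ng.
split.
  split.
  - by move=> xs Lx; rewrite Vf // Vg // maxxx.
  - by move=> lam xs l0 Lx Llx; rewrite Pf // Pg // maxr_pMr.
  - apply: (@le_lt_trans _ _ ((1 * U + 1 * V)%:E)); last exact: ltry.
    by apply: (norm_dom _ _ HU HV) => // xs _; rewrite !mul1r max_bd.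
move=> e e0; have e2 : 0 < e / 2 by rewrite divr_gt0.
have [hf [ghf Hf]] := Af _ e2; have [hg [ghg Hg]] := Ag _ e2.
exists (fun xs => Num.max (hf xs) (hg xs)); split; first exact: gen_max.
apply: le_trans (_ : (fbl_norm _ <= (1 * (e / 2) + 1 * (e / 2))%:E)%E) _.
  by apply: (norm_dom _ _ Hf Hg) => // xs _; rewrite !mul1r; exact: max_lip.
by rewrite lee_fin !mul1r -splitr.
Qed.

Lemma FBL_min f g : FBL f -> FBL g -> FBL (fun xs => Num.min (f xs) (g xs)).
Proof.
move=> [[Vf Pf Nf] Af] [[Vg Pg Ng] Ag].
have [U HU] := norm_fin Nf; have [V HV] := norm_fin Ng.
split.
  split.
  - by move=> xs Lx; rewrite Vf // Vg // minxx.
  - by move=> lam xs l0 Lx Llx; rewrite Pf // Pg // minr_pMr.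
  - apply: (@le_lt_trans _ _ ((1 * U + 1 * V)%:E)); last exact: ltry.
    by apply: (norm_dom _ _ HU HV) => // xs _; rewrite !mul1r min_bd.
move=> e e0; have e2 : 0 < e / 2 by rewrite divr_gt0.
have [hf [ghf Hf]] := Af _ e2; have [hg [ghg Hg]] := Ag _ e2.
exists (fun xs => Num.min (hf xs) (hg xs)); split; first exact: gen_min.
apply: le_trans (_ : (fbl_norm _ <= (1 * (e / 2) + 1 * (e / 2))%:E)%E) _.
  by apply: (norm_dom _ _ Hf Hg) => // xs _; rewrite !mul1r; exact: min_lip.
by rewrite lee_fin !mul1r -splitr.
Qed.

End MaxMin.

Lemma small0 (R : realType) (x : R) : (forall e, 0 < e -> `|x| <= e) -> x = 0.
Proof.
move=> H; apply/eqP; rewrite -normr_eq0; apply: contraT => nx.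
have x0 : 0 < `|x| by rewrite lt0r nx normr_ge0.
have := H (`|x| / 2) (divr_gt0 x0 (ltr0Sn _ 1)).
move: x0; set y := `|x| => y0 Hy. lra.
Qed.

Section Hom.
Variables (R : realType) (d : Order.disp_t) (L : distrLatticeType d)
  (d' : Order.disp_t) (M : distrLatticeType d').
Implicit Types (U : ((L -> R) -> R) -> ((M -> R) -> R)).

Lemma hom0 U : lattice_hom U -> forall zs, U (fun _ => 0%R) zs = 0.
Proof.
case=> _ lin _ _ zs.
have E : @eq ((L -> R) -> R) (fun _ : L -> R => 0%R)
   (fun xs => 0 * (fun _ : L -> R => 0%R) xs + 0 * (fun _ : L -> R => 0%R) xs).
  by apply: funext => xs /=; rewrite mul0r addr0.
rewrite E lin; try exact: FBL0. by ring.
Qed.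

Lemma hom_gen U (zs : M -> R) : lattice_hom U -> Lstar zs -> Lstar (Phi U zs) ->
  forall h, gen h -> h (Phi U zs) = U h zs.
Proof.
move=> hU Lz LP; case: (hU) => FU lin hmax hmin.
move=> h; elim => {h}.
- by move=> x; rewrite /delta asboolT.
- by rewrite hom0.
- move=> f g gf IHf gg IHg; rewrite IHf IHg.
  have -> : (fun xs => f xs + g xs) = (fun xs => 1 * f xs + 1 * g xs).
    by apply: funext => xs; rewrite !mul1r.
  by rewrite lin; try exact: FBL_gen; rewrite /=; ring.
- move=> a f gf IHf; rewrite IHf.
  have -> : (fun xs => a * f xs) = (fun xs => a * f xs + 0 * f xs).
    by apply: funext => xs; rewrite mul0r addr0.
  by rewrite lin; try exact: FBL_gen; rewrite /=; ring.
- by move=> f g gf IHf gg IHg; rewrite IHf IHg hmax //; exact: FBL_gen.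
- by move=> f g gf IHf gg IHg; rewrite IHf IHg hmin //; exact: FBL_gen.
Qed.

Lemma hom_bound U (c r : R) (f h : (L -> R) -> R) (zs : M -> R) : lattice_hom U -> (op_norm U <= c%:E)%E ->
  FBL f -> FBL h -> 0 < r ->
  (fbl_norm (fun xs => (f xs - h xs)%R) <= r%:E)%E -> Lstar zs ->
  `|U f zs - U h zs| <= c * r.
Proof.
move=> [FU lin _ _] Hc Ff Fh r0 Hn Lz.
set k := fun xs => r^-1 * f xs + (- r^-1) * h xs.
have Fk : FBL k := FBL_comb _ _ Ff Fh.
have nk : (fbl_norm k <= 1%:E)%E.
  apply: le_trans (_ : _ <= (r^-1 * r + 0 * r)%:E)%E _.
    apply: (norm_dom _ _ Hn Hn) => //; first by rewrite invr_ge0 ltW.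
    move=> xs _; rewrite mul0r addr0 /k mulNr -mulrBr normrM ger0_norm //.
    by rewrite invr_ge0 ltW.
  by rewrite mul0r addr0 mulVf ?gt_eqF.
have : (fbl_norm (U k) <= c%:E)%E.
  by apply: le_trans Hc; apply: ereal_sup_ubound; exists k.
rewrite /k lin // => Hk.
have := le_trans (pt_bound _ Lz) Hk; rewrite lee_fin => H2.
have -> : U f zs - U h zs = r * (r^-1 * U f zs + - r^-1 * U h zs).
  by field; rewrite gt_eqF.
by rewrite normrM gtr0_norm // mulrC ler_pM2r.
Qed.

Lemma hom_comp U (g : (L -> R) -> R) (zs : M -> R) : lattice_hom U -> (op_norm U <= 1%:E)%E ->
  FBL g -> Lstar zs -> Lstar (Phi U zs) -> g (Phi U zs) = U g zs.
Proof.
move=> hU Hn Fg Lz LP; apply/eqP; rewrite -subr_eq0; apply/eqP/small0 => e e0.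
have e2 : 0 < e / 2 by rewrite divr_gt0.
have [h [gh Hh]] := Fg.2 _ e2.
have H1 := le_trans (pt_bound _ LP) Hh; rewrite lee_fin /= in H1.
have H2 := hom_bound hU Hn Fg (FBL_gen gh) e2 Hh Lz.
rewrite (hom_gen hU Lz LP gh) in H1.
have -> : g (Phi U zs) - U g zs =
  (g (Phi U zs) - U h zs) + (U h zs - U g zs) by ring.
apply: le_trans (ler_normD _ _) _.
rewrite mul1r distrC in H2.
have := lerD H1 H2; lra.
Qed.

Lemma maps_to U (zs : M -> R) : lattice_hom U -> (op_norm U <= 1%:E)%E ->
  Lstar zs -> Lstar (Phi U zs).
Proof.
move=> hU Hn Lz; case: (hU) => FU lin hmax hmin.
split; [|split].
- move=> x; rewrite -ler_norml.
  have N : (fbl_norm (U (delta x)) <= 1%:E)%E.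
    apply: le_trans Hn; apply: ereal_sup_ubound; exists (delta x) => //.
    by split; [exact: FBL_delta | exact: norm_delta].
  by have := le_trans (pt_bound (U (delta x)) Lz) N; rewrite lee_fin.
- move=> x y; rewrite /Phi.
  have -> : delta (Order.meet x y) =
     (fun xs => Num.min (delta x xs) (delta y xs) : R).
    apply: funext => xs; rewrite /delta.
    by case: asboolP => [[_ [Hm _]] | _]; [exact: Hm | rewrite minxx].
  by rewrite hmin //; exact: FBL_delta.
- move=> x y; rewrite /Phi.
  have -> : delta (Order.join x y) =
     (fun xs => Num.max (delta x xs) (delta y xs) : R).
    apply: funext => xs; rewrite /delta.
    by case: asboolP => [[_ [_ Hm]] | _]; [exact: Hm | rewrite maxxx].
  by rewrite hmax //; exact: FBL_delta.
Qed.

End Hom.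

Section Main.
Variables (R : realType) (d : Order.disp_t) (L : distrLatticeType d)
  (d' : Order.disp_t) (M : distrLatticeType d').
Implicit Types (T : ((L -> R) -> R) -> ((M -> R) -> R)).

Lemma part2 T : lattice_hom T -> dense_range T -> (op_norm T <= 1%:E)%E ->
  {in @Lstar R _ M &, injective (Phi T)}.
Proof.
move=> hT dT nT y1 y2 /set_mem L1 /set_mem L2 E.
apply: funext => y; apply/eqP; rewrite -subr_eq0; apply/eqP/small0 => e e0.
have hT1 : forall f, FBL f -> T f y1 = T f y2.
  move=> f Ff.
  rewrite -(hom_comp hT nT Ff L1 (maps_to hT nT L1)).
  by rewrite -(hom_comp hT nT Ff L2 (maps_to hT nT L2)) E.
have e2 : 0 < e / 2 by rewrite divr_gt0.
have [f [Ff Hf]] := dT _ (FBL_delta y) _ e2.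
have H1 := le_trans (pt_bound _ L1) (ltW Hf).
have H2 := le_trans (pt_bound _ L2) (ltW Hf).
rewrite lee_fin /delta asboolT // hT1 // in H1.
rewrite lee_fin /delta asboolT // in H2.
have -> : y1 y - y2 y = (T f y2 - y2 y) - (T f y2 - y1 y) by ring.
apply: le_trans (ler_normB _ _) _.
have := lerD H2 H1; lra.
Qed.

Lemma iso_norm T : isometric_iso T -> (op_norm T <= 1%:E)%E.
Proof.
case=> _ _ isoN; apply: ge_ereal_sup => _ [f [Ff nf] <-].
by rewrite isoN.
Qed.

End Main.

Section Inv.
Variables (R : realType) (d : Order.disp_t) (L : distrLatticeType d)
  (d' : Order.disp_t) (M : distrLatticeType d').

Lemma inv_hom (T : ((L -> R) -> R) -> ((M -> R) -> R))
   (S : ((M -> R) -> R) -> ((L -> R) -> R)) :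
  lattice_hom T -> isometric_iso T ->
  (forall f, FBL f -> FBL (S (T f)) /\ S (T f) = f) ->
  (forall g, FBL g -> FBL (S g) /\ T (S g) = g) ->
  lattice_hom S /\ (op_norm S <= 1%:E)%E.
Proof.
case=> FT linT maxT minT [_ _ isoN] ST TS; split.
  split.
  - by move=> g /TS [].
  - move=> a b g1 g2 F1 F2; have [F1' E1] := TS _ F1; have [F2' E2] := TS _ F2.
    have -> : (fun ys => a * g1 ys + b * g2 ys) =
        T (fun xs => a * S g1 xs + b * S g2 xs) by rewrite linT // E1 E2.
    by case: (ST _ (FBL_comb a b F1' F2')) => _ ->.
  - move=> g1 g2 F1 F2; have [F1' E1] := TS _ F1; have [F2' E2] := TS _ F2.
    have -> : (fun ys => Num.max (g1 ys) (g2 ys)) =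
        T (fun xs => Num.max (S g1 xs) (S g2 xs)) by rewrite maxT // E1 E2.
    by case: (ST _ (FBL_max F1' F2')) => _ ->.
  - move=> g1 g2 F1 F2; have [F1' E1] := TS _ F1; have [F2' E2] := TS _ F2.
    have -> : (fun ys => Num.min (g1 ys) (g2 ys)) =
        T (fun xs => Num.min (S g1 xs) (S g2 xs)) by rewrite minT // E1 E2.
    by case: (ST _ (FBL_min F1' F2')) => _ ->.
apply: ge_ereal_sup => _ [g [Fg ng] <-].
have [Fs Ts] := TS _ Fg.
by rewrite -isoN // Ts.
Qed.

Lemma roundtrip (T : ((L -> R) -> R) -> ((M -> R) -> R))
   (S : ((M -> R) -> R) -> ((L -> R) -> R)) :
  lattice_hom T -> (op_norm T <= 1%:E)%E ->
  (forall g, FBL g -> FBL (S g) /\ T (S g) = g) ->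
  forall ys, Lstar ys -> Phi S (Phi T ys) = ys.
Proof.
move=> hT nT TS ys Lys; apply: funext => y.
change (S (delta y) (Phi T ys) = ys y).
have [Fs Ts] := TS _ (FBL_delta y).
rewrite (hom_comp hT nT Fs Lys (maps_to hT nT Lys)) Ts.
by rewrite /delta asboolT.
Qed.

End Inv.

Lemma term_le_sum (R : realType) m (F : 'I_m -> R) i :
  (forall j, 0 <= F j) -> F i <= \sum_(j < m) F j.
Proof. by move=> H; rewrite (bigD1 i) //= lerDl sumr_ge0 // => j _; exact: H. Qed.

Section P34.
Variables (R : realType) (d : Order.disp_t) (L : distrLatticeType d)
  (d' : Order.disp_t) (M : distrLatticeType d').
Implicit Types (T : ((L -> R) -> R) -> ((M -> R) -> R)).

Lemma part3 T : lattice_hom T ->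
      (isometric_iso T ->
         set_bij (@Lstar R _ M) (@Lstar R _ L) (Phi T) /\
         forall S : ((M -> R) -> R) -> ((L -> R) -> R),
           (forall f, FBL f -> FBL (S (T f)) /\ S (T f) = f) ->
           (forall g, FBL g -> FBL (S g) /\ T (S g) = g) ->
           (forall ys, @Lstar R _ M ys -> Phi S (Phi T ys) = ys) /\
           (forall xs, @Lstar R _ L xs -> Phi T (Phi S xs) = xs)).
Proof.
move=> hT iso; have nT := iso_norm iso.
case: (hT) => FT _ _ _.
have Spart : forall S : ((M -> R) -> R) -> ((L -> R) -> R),
    (forall f, FBL f -> FBL (S (T f)) /\ S (T f) = f) ->
    (forall g, FBL g -> FBL (S g) /\ T (S g) = g) ->
    [/\ lattice_hom S, (op_norm S <= 1%:E)%E,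
      (forall ys, @Lstar R _ M ys -> Phi S (Phi T ys) = ys) &
      (forall xs, @Lstar R _ L xs -> Phi T (Phi S xs) = xs)].
  move=> S ST TS; have [hS nS] := inv_hom hT iso ST TS; split => //.
    exact: roundtrip hT nT TS.
  apply: (roundtrip hS nS) => f Ff; split; first exact: FT.
  by case: (ST _ Ff).
split; last first.
  by move=> S ST TS; have [_ _ ? ?] := Spart S ST TS.
have : forall g : (M -> R) -> R, exists f : (L -> R) -> R,
    FBL g -> FBL f /\ T f = g.
  move=> g; case: (pselect (FBL g)) => [Fg|nFg].
    by case: iso => _ sur _; have [f Ff E] := sur g Fg; exists f.
  by exists (fun _ => 0%R) => /nFg.
move=> /choice [S HS].
have ST : forall f, FBL f -> FBL (S (T f)) /\ S (T f) = f.
  move=> f Ff; have [F1 E1] := HS _ (FT _ Ff); split => //.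
  by case: iso => inj _ _; exact: inj.
have [hS nS RT1 RT2] := Spart S ST HS.
split.
- by move=> ys Lys; exact: maps_to hT nT Lys.
- by move=> y1 y2 /set_mem L1 /set_mem L2 E; rewrite -(RT1 _ L1) E RT1.
- move=> xs Lxs; exists (Phi S xs); first exact: maps_to hS nS Lxs.
  exact: RT2.
Qed.

Lemma part4 T : lattice_hom T ->
  forall (m : nat) (ys : 'I_m -> M -> R), (forall i, @Lstar R _ M (ys i)) ->
         (ereal_sup [set (\sum_(i < m) `|Phi T (ys i) x|)%:E | x in [set: L]]
          <= op_norm T * ereal_sup [set (\sum_(i < m) `|ys i y|)%:E | y in [set: M]])%E.
Proof.
move=> hT m ys Ly; case: (hT) => FT lin _ _.
have Nx : forall x : L, (fbl_norm (T (delta x)) <= op_norm T)%E.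
  move=> x; apply: ereal_sup_ubound; exists (delta x) => //.
  by split; [exact: FBL_delta | exact: norm_delta].
have PH : forall x : L, pos_hom (T (delta x)).
  by move=> x; have [[_ P _] _] := FT _ (FBL_delta x).
case: (pselect (exists y : M, True)) => [[y0 _]|noM].
- set s := (X in (_ <= _ * X)%E).
  have s_ge : forall y, ((\sum_(i < m) `|ys i y|)%:E <= s)%E.
    by move=> y; apply: ereal_sup_ubound; exists y.
  have s_le : (s <= (m%:R : R)%:E)%E.
    apply: ge_ereal_sup => _ [y _ <-]; rewrite lee_fin.
    apply: le_trans (_ : \sum_(i < m) (1 : R) <= _).
      by apply: ler_sum => i _; exact: Lstar_bd.
    by rewrite sumr_const card_ord.
  have s0 : (0 <= s)%E.
    apply: le_trans (s_ge y0); rewrite lee_fin; apply: sumr_ge0 => i _.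
    exact: normr_ge0.
  have sfin : s \is a fin_num.
    by rewrite ge0_fin_numE // (le_lt_trans s_le) // ltry.
  rewrite -(fineK sfin); set r := fine s.
  have r0 : 0 <= r by rewrite -lee_fin /r fineK.
  have s_ge' : forall y, \sum_(i < m) `|ys i y| <= r.
    by move=> y; rewrite -lee_fin /r fineK.
  apply: ge_ereal_sup => _ [x _ <-].
  move: r0; rewrite le0r => /orP [/eqP rz | rpos].
  + rewrite rz mule0 lee_fin big1 ?normr0 // => i _; rewrite /Phi.
    have Z : (fun y => 0 * ys i y) = ys i.
      apply: funext => y; have := s_ge' y; rewrite rz => Hy.
      have S0 : \sum_(j < m) `|ys j y| = 0.
        by apply: le_anti; rewrite Hy sumr_ge0 // => j _; exact: normr_ge0.
      have := psumr_eq0P (P := xpredT) (F := fun j => `|ys j y|)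
        (fun j _ => normr_ge0 _) S0 (i := i) isT.
      by move/normr0_eq0 => ->; rewrite mulr0.
    have := PH x 0 (ys i) (lexx 0) (Ly i); rewrite Z => /(_ (Ly i)) E.
    move: E; set a := T (delta x) (ys i) => E.
    have -> : a = 0 by lra.
    by rewrite normr0.
  + set zs := fun i y => r^-1 * ys i y.
    have ri : 0 <= r^-1 by rewrite invr_ge0 ltW.
    have Lz : forall i, Lstar (zs i).
      move=> i; have [Hb [Hm Hj]] := Ly i; split; [|split].
      - move=> y; rewrite -ler_norml /zs normrM ger0_norm //.
        rewrite mulrC ler_pdivrMr // mul1r; apply: le_trans _ (s_ge' y).
        by apply: (term_le_sum (F := fun j => `|ys j y|)) => j; exact: normr_ge0.
      - by move=> a b; rewrite /zs Hm minr_pMr.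
      - by move=> a b; rewrite /zs Hj maxr_pMr.
    have Zr : forall i, (fun y => r * zs i y) = ys i.
      move=> i; apply: funext => y.
      by rewrite /zs mulrA mulfV ?gt_eqF // mul1r.
    have HT : forall i, T (delta x) (ys i) = r * T (delta x) (zs i).
      by move=> i; have := PH x r (zs i) (ltW rpos) (Lz i); rewrite Zr => /(_ (Ly i)).
    have Hsum : ((\sum_(i < m) `|T (delta x) (zs i)|)%:E <= fbl_norm (T (delta x)))%E.
      apply: ereal_sup_ubound; exists m, zs; split => // y.
      rewrite (eq_bigr (fun i => r^-1 * `|ys i y|)); last first.
        by move=> i _; rewrite /zs normrM ger0_norm.
      by rewrite -mulr_sumr mulrC ler_pdivrMr // mul1r.
    rewrite /Phi (eq_bigr (fun i => r * `|T (delta x) (zs i)|)); last first.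
      by move=> i _; rewrite HT normrM gtr0_norm.
    rewrite -mulr_sumr EFinM muleC.
    apply: lee_wpmul2r; first by rewrite lee_fin ltW.
    exact: le_trans Hsum (Nx x).
- have g0 : forall g : (M -> R) -> R, FBL g -> forall zs, g zs = 0.
    move=> g [[_ P _] _] zs.
    have Lz : Lstar zs.
      by split; [move=> y | split=> y]; exfalso; apply: noM; exists y.
    have E2 : (fun y => 2 * zs y) = zs.
      by apply: funext => y; exfalso; apply: noM; exists y.
    have := P 2 zs (ler0n _ 2) Lz; rewrite E2 => /(_ Lz) E.
    by move: E; set a := g zs => E; lra.
  have opn : op_norm T = 0.
    apply/le_anti/andP; split.
      apply: ge_ereal_sup => _ [f [Ff _] <-].
      rewrite (_ : T f = fun _ => 0%R); first exact: norm0.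
      by apply: funext => zs; exact: g0 (FT _ Ff) zs.
    apply: le_trans (norm_ge0 (T (fun _ => 0%R))) _.
    apply: ereal_sup_ubound; exists (fun _ => 0%R) => //; split; first exact: FBL0.
    by apply: le_trans norm0 _; rewrite lee_fin.
  rewrite opn mul0e; apply: ge_ereal_sup => _ [x _ <-].
  rewrite lee_fin big1 // => i _.
  by rewrite /Phi (g0 _ (FT _ (FBL_delta x))) normr0.
Qed.

End P34.

Lemma ptwsP (U : choiceType) (V : uniformType) (F : set_system (U -> V)) (f : U -> V) :
  Filter F -> (forall t, (fun g => g t) @ F --> f t) -> {ptws, F --> f}.
Proof.
move=> FF pf; rewrite cvg_sup => i.
have := pf i.
rewrite cvg_image; last by rewrite eqEsubset; split=> v // _; exists (cst v).
move=> + W //=; rewrite ?nbhs_simpl => Q => /Q Q'; exists (@^~ i @^-1` W) => //.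
by rewrite eqEsubset; split => [j [? + <-//]|j Wj]; exists (fun _ => j).
Qed.

Section Cont.
Variables (R : realType) (d' : Order.disp_t) (M : distrLatticeType d').

Definition ctsat (h : (M -> R) -> R) (ys : M -> R) :=
  forall e : R, 0 < e -> exists N : set (M -> R),
    nbhs (ys : {ptws M -> R}) N /\ forall zs, N zs -> Lstar zs -> `|h zs - h ys| < e.

Lemma delta_cts (y : M) (ys : M -> R) : Lstar ys -> ctsat (delta y) ys.
Proof.
move=> Lys e e0.
have := @proj_continuous M (fun _ => R) y ys.
move=> H.
have H2 : \forall zs \near (ys : {ptws M -> R}), `|ys y - zs y| < e.
  exact: (proj1 (@cvgrPdist_lt R R^o _ (nbhs (ys : {ptws M -> R})) _ (fun zs => zs y) (ys y)) H e e0).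
exists [set zs | `|ys y - zs y| < e]; split; first exact: H2.
by move=> zs Nz Lz; rewrite /delta !asboolT // distrC.
Qed.

Lemma gen_cts (h : (M -> R) -> R) (ys : M -> R) : Lstar ys -> gen h -> ctsat h ys.
Proof.
move=> Lys; elim => {h}.
- by move=> y; exact: delta_cts.
- move=> e e0; exists setT; split; first exact: (@filterT _ (nbhs (ys : {ptws M -> R})) _).
  move=> * /=; have h0 : forall z : R, `|z - z| < e by move=> z; rewrite subrr normr0.
  exact: h0.
- move=> f g _ IHf _ IHg e e0; have e2 : 0 < e / 2 by rewrite divr_gt0.
  have [N1 [n1 H1]] := IHf _ e2; have [N2 [n2 H2]] := IHg _ e2.
  exists (N1 `&` N2); split; first exact: (@filterI _ (nbhs (ys : {ptws M -> R})) _ _ _ n1 n2).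
  move=> zs [z1 z2] Lz; have a := H1 _ z1 Lz; have b := H2 _ z2 Lz.
  have -> : f zs + g zs - (f ys + g ys) = (f zs - f ys) + (g zs - g ys) by ring.
  apply: le_lt_trans (ler_normD _ _) _.
  move: a b; set A := `|f zs - f ys|; set B := `|g zs - g ys| => a b; lra.
- move=> a f _ IHf e e0.
  have c0 : 0 < `|a| + 1 by apply: ltr_wpDl.
  have e2 : 0 < e / (`|a| + 1) by rewrite divr_gt0.
  have [N [n H]] := IHf _ e2.
  exists N; split => // zs Nz Lz.
  rewrite -mulrBr normrM.
  apply: le_lt_trans (_ : `|a| * (e / (`|a| + 1)) < e).
    by apply: ler_wpM2l => //; exact: ltW (H _ Nz Lz).
  rewrite mulrA ltr_pdivrMr // mulrDr mulr1 mulrC ltrDl //.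
- move=> f g _ IHf _ IHg e e0; have e2 : 0 < e / 2 by rewrite divr_gt0.
  have [N1 [n1 H1]] := IHf _ e2; have [N2 [n2 H2]] := IHg _ e2.
  exists (N1 `&` N2); split; first exact: (@filterI _ (nbhs (ys : {ptws M -> R})) _ _ _ n1 n2).
  move=> zs [z1 z2] Lz; have a := H1 _ z1 Lz; have b := H2 _ z2 Lz.
  apply: le_lt_trans (max_lip _ _ _ _) _.
  move: a b; set A := `|f zs - f ys|; set B := `|g zs - g ys| => a b; lra.
- move=> f g _ IHf _ IHg e e0; have e2 : 0 < e / 2 by rewrite divr_gt0.
  have [N1 [n1 H1]] := IHf _ e2; have [N2 [n2 H2]] := IHg _ e2.
  exists (N1 `&` N2); split; first exact: (@filterI _ (nbhs (ys : {ptws M -> R})) _ _ _ n1 n2).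
  move=> zs [z1 z2] Lz; have a := H1 _ z1 Lz; have b := H2 _ z2 Lz.
  apply: le_lt_trans (min_lip _ _ _ _) _.
  move: a b; set A := `|f zs - f ys|; set B := `|g zs - g ys| => a b; lra.
Qed.

Lemma FBL_cts (g : (M -> R) -> R) (ys : M -> R) : Lstar ys -> FBL g -> ctsat g ys.
Proof.
move=> Lys Fg e e0; have e3 : 0 < e / 3 by rewrite divr_gt0.
have [h [gh Hh]] := Fg.2 _ e3.
have [N [nN HN]] := gen_cts Lys gh e3.
exists N; split => // zs Nz Lz.
have H1 := le_trans (pt_bound _ Lz) Hh; have H2 := le_trans (pt_bound _ Lys) Hh.
rewrite lee_fin /= in H1; rewrite lee_fin /= in H2; have H3 := HN _ Nz Lz.
have -> : g zs - g ys = ((g zs - h zs) + (h zs - h ys)) - (g ys - h ys) by ring.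
apply: le_lt_trans (ler_normB _ _) _.
apply: le_lt_trans (lerD (ler_normD _ _) (lexx _)) _.
move: H1 H2 H3; set A := `|g zs - h zs|; set B := `|g ys - h ys|;
  set C := `|h zs - h ys| => H1 H2 H3; lra.
Qed.

End Cont.

Lemma part1 (R : realType) d (L : distrLatticeType d)
    d' (M : distrLatticeType d')
    (T : ((L -> R) -> R) -> ((M -> R) -> R)) :
  lattice_hom T ->
  {within (@Lstar R _ M : set {ptws M -> R}), continuous (Phi T : {ptws M -> R} -> {ptws L -> R})}.
Proof.
case=> FT _ _ _.
apply/subspace_continuousP => ys Lys.
apply: ptwsP => x.
apply/cvgrPdist_lt => e e0.
have [N [nN HN]] := FBL_cts Lys (FT _ (FBL_delta x)) e0.
have W : nbhs (ys : {ptws M -> R})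
    [set zs | Lstar zs -> `|Phi T ys x - Phi T zs x| < e].
  apply: (@filterS _ (nbhs (ys : {ptws M -> R})) _ N) => // zs Nz Lz.
  by rewrite distrC; exact: HN.
exact: W.
Qed.


Unset Implicit Arguments.

Theorem mainTheorem18 (R : realType) d (L : distrLatticeType d)
    d' (M : distrLatticeType d')
    (T : ((L -> R) -> R) -> ((M -> R) -> R)) :
  lattice_hom T ->
  [/\ (* (1) *)
      {within (@Lstar R _ M : set {ptws M -> R}), continuous (Phi T : {ptws M -> R} -> {ptws L -> R})},
      (* (2) *)
      (dense_range T -> (op_norm T <= 1%:E)%E -> {in @Lstar R _ M &, injective (Phi T)}),
      (* (3) *)
      (isometric_iso T ->
         set_bij (@Lstar R _ M) (@Lstar R _ L) (Phi T) /\
         forall S : ((M -> R) -> R) -> ((L -> R) -> R),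
           (forall f, FBL f -> FBL (S (T f)) /\ S (T f) = f) ->
           (forall g, FBL g -> FBL (S g) /\ T (S g) = g) ->
           (forall ys, @Lstar R _ M ys -> Phi S (Phi T ys) = ys) /\
           (forall xs, @Lstar R _ L xs -> Phi T (Phi S xs) = xs)) &
      (* (4) *)
      (forall (m : nat) (ys : 'I_m -> M -> R), (forall i, @Lstar R _ M (ys i)) ->
         (ereal_sup [set (\sum_(i < m) `|Phi T (ys i) x|)%:E | x in [set: L]]
          <= op_norm T * ereal_sup [set (\sum_(i < m) `|ys i y|)%:E | y in [set: M]])%E)].
Proof.
move=> hT; split.
- exact: part1.
- by move=> dT nT; exact: part2.
- exact: part3.
- exact: part4.
Qed.
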